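(* Consider the planar system $$\frac{dN}{dt}=rN\left(1-\frac{N}{K}-\frac{h}{w+N}\right)-\frac{aNP}{b+N^2},\qquad \frac{dP}{dt}=\frac{cNP}{b+N^2}-\delta P,$$ where $r,K,h,w,a,b,c,\delta$ are positive constants. Suppose $K>w$ and the Allee effect is strong, i.e. $h>w$. Let $$N_{1}=\frac{(K-w)+\sqrt{(K-w)^2-4K(h-w)}}{2},\quad N_{2}=\frac{(K-w)-\sqrt{(K-w)^2-4K(h-w)}}{2},\quad N_3=\frac{K-w}{2},$$ and $E_n=(N_n,0)$ for $n=1,2,3$ (whenever these are equilibria). (i) If $h=\frac{(K+w)^2}{4K}$ and $c<\frac{\delta(b+N_3^2)}{N_3}$, then the axial equilibrium point $E_3$ is non-hyperbolic. (ii) If $h<\frac{(K+w)^2}{4K}$, and $c<\frac{\delta(b+N_n^2)}{N_n}$ for $n=1,2$, then the axial equilibrium point $E_1$ is locally asymptotically stable and the axial equilibrium point $E_2$ is unstable (a saddle).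
   Context: $N(t)$ is the prey density and $P(t)$ the predator density. An equilibrium is non-hyperbolic if the Jacobian matrix of the system at it has an eigenvalue with zero real part. *)

(* Defs.v *)
From Stdlib Require Import Reals.
From Coquelicot Require Import Coquelicot.
Open Scope R_scope.

Definition fN (r K h w a b : R) (N P : R) : R :=
  r * N * (1 - N / K - h / (w + N)) - a * N * P / (b + N ^ 2).
Definition fP (b c delta : R) (N P : R) : R :=
  c * N * P / (b + N ^ 2) - delta * P.

Definition is_equilibrium (f g : R -> R -> R) (x y : R) : Prop :=
  f x y = 0 /\ g x y = 0.

Definition jacobian (f g : R -> R -> R) (x y : R) : R * R * R * R :=
  (Derive (fun u => f u y) x, Derive (fun v => f x v) y,
   Derive (fun u => g u y) x, Derive (fun v => g x v) y).

Definition is_jac_eigenvalue (f g : R -> R -> R) (x y : R) (lam : C) : Prop :=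
  let '(j11, j12, j21, j22) := jacobian f g x y in
  ((RtoC j11 - lam) * (RtoC j22 - lam) - RtoC j12 * RtoC j21 = 0)%C.

Definition non_hyperbolic (f g : R -> R -> R) (x y : R) : Prop :=
  exists lam, is_jac_eigenvalue f g x y lam /\ Re lam = 0.

Definition loc_asympt_stable (f g : R -> R -> R) (x y : R) : Prop :=
  forall lam, is_jac_eigenvalue f g x y lam -> Re lam < 0.

Definition unstable (f g : R -> R -> R) (x y : R) : Prop :=
  exists lam, is_jac_eigenvalue f g x y lam /\ 0 < Re lam.

Definition saddle (f g : R -> R -> R) (x y : R) : Prop :=
  (forall lam, is_jac_eigenvalue f g x y lam -> Im lam = 0) /\
  (exists lam, is_jac_eigenvalue f g x y lam /\ 0 < Re lam) /\
  (exists lam, is_jac_eigenvalue f g x y lam /\ Re lam < 0).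

Definition N1 (K w h : R) : R := ((K - w) + sqrt ((K - w) ^ 2 - 4 * K * (h - w))) / 2.
Definition N2 (K w h : R) : R := ((K - w) - sqrt ((K - w) ^ 2 - 4 * K * (h - w))) / 2.
Definition N3 (K w : R) : R := (K - w) / 2.

(* Main.v *)
Require Import Defs.
From Stdlib Require Import Reals Lra Psatz.
From Coquelicot Require Import Coquelicot.
Open Scope R_scope.
Lemma eig (A B X: R) lam: ((RtoC A - lam)*(RtoC B - lam) - RtoC X * RtoC 0 = 0)%C -> Im lam = 0 /\ (Re lam = A \/ Re lam = B).
Proof.
  destruct lam as [x y]; intro H.
  assert (H1 := f_equal fst H); assert (H2 := f_equal snd H).
  simpl in H1, H2. unfold Re, Im; simpl.
  ring_simplify in H1. ring_simplify in H2.
  assert (Hy : y = 0).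
  { assert (y * (2*x - A - B) = 0) by lra.
    destruct (Rmult_integral _ _ H0); auto. assert (x = (A+B)/2) by lra. subst x. assert (Hq: (A-B)^2/4 + y^2 = 0) by lra. assert (0 <= (A-B)^2) by apply pow2_ge_0. assert (0 <= y^2) by apply pow2_ge_0. assert (y^2 = 0) by lra. nra. }
  subst y. split; auto.
  assert ((x-A)*(x-B)=0) by nra.
  destruct (Rmult_integral _ _ H0); [left|right]; lra.
Qed.
Lemma eigA (A B X: R) : ((RtoC A - RtoC A)*(RtoC B - RtoC A) - RtoC X * RtoC 0 = 0)%C.
Proof. apply injective_projections; simpl; ring. Qed.
Lemma eigB (A B X: R) : ((RtoC A - RtoC B)*(RtoC B - RtoC B) - RtoC X * RtoC 0 = 0)%C.
Proof. apply injective_projections; simpl; ring. Qed.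
Lemma J11 r K h w a b N : 0 < K -> 0 < w -> 0 < b -> 0 < N ->
  Derive (fun u => fN r K h w a b u 0) N = r*(1 - N/K - h/(w+N)) + r*N*(-1/K + h/(w+N)^2).
Proof.
  intros. apply is_derive_unique. unfold fN. auto_derive.
  - repeat split; lra || nra.
  - field. split; lra || nra.
Qed.
Lemma J21 b c d N : 0 < b ->
  Derive (fun u => fP b c d u 0) N = 0.
Proof.
  intros. apply is_derive_unique. unfold fP. auto_derive.
  - nra.
  - field. nra.
Qed.
Lemma J22 b c d N : 0 < b ->
  Derive (fun v => fP b c d N v) 0 = c*N/(b+N^2) - d.
Proof.
  intros. apply is_derive_unique. unfold fP. auto_derive.
  - nra.
  - field. nra.
Qed.

Lemma gen r K h w a b c delta N : 0 < K -> 0 < w -> 0 < b -> 0 < N ->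
  N^2 - (K-w)*N + K*(h-w) = 0 ->
  is_equilibrium (fN r K h w a b) (fP b c delta) N 0 /\
  (forall lam, is_jac_eigenvalue (fN r K h w a b) (fP b c delta) N 0 lam ->
     Im lam = 0 /\ (Re lam = r*N*(K-w-2*N)/(K*(w+N)) \/ Re lam = c*N/(b+N^2) - delta)) /\
  is_jac_eigenvalue (fN r K h w a b) (fP b c delta) N 0 (RtoC (r*N*(K-w-2*N)/(K*(w+N)))) /\
  is_jac_eigenvalue (fN r K h w a b) (fP b c delta) N 0 (RtoC (c*N/(b+N^2) - delta)).
Proof.
  intros HK Hw Hb HN Hq.
  assert (Hk : h*K = (K-N)*(w+N)) by nra.
  assert (Hh : h = (K-N)*(w+N)/K) by (rewrite <- Hk; field; lra).
  assert (E : r*(1 - N/K - h/(w+N)) + r*N*(-1/K + h/(w+N)^2) = r*N*(K-w-2*N)/(K*(w+N))).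
  { rewrite Hh. field. split; lra. }
  unfold is_jac_eigenvalue, jacobian.
  rewrite J11, J21, J22, E by assumption.
  cbv beta iota zeta.
  split; [|split; [|split]].
  - unfold is_equilibrium, fN, fP. split.
    + rewrite Hh. field. split; [nra| lra].
    + field. nra.
  - intros lam H. apply eig in H. exact H.
  - apply eigA.
  - apply eigB.
Qed.

Lemma j22neg b c d N : 0 < N -> 0 < b -> c < d*(b+N^2)/N -> c*N/(b+N^2) - d < 0.
Proof.
  intros HN Hb H.
  assert (c*N < d*(b+N^2)).
  { replace (d*(b+N^2)) with (d*(b+N^2)/N*N) by (field; lra).
    apply Rmult_lt_compat_r; lra. }
  assert (c*N/(b+N^2) < d); [|lra].
  apply (Rmult_lt_reg_r (b+N^2)); [nra|].
  replace (c*N/(b+N^2)*(b+N^2)) with (c*N) by (field; nra). lra.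
Qed.

Lemma j11pos r K w N s : 0 < r -> 0 < K -> 0 < w -> 0 < N -> 0 < s ->
  0 < r*N*s/(K*(w+N)).
Proof.
  intros. apply Rdiv_lt_0_compat.
  - apply Rmult_lt_0_compat; [apply Rmult_lt_0_compat|]; lra.
  - apply Rmult_lt_0_compat; lra.
Qed.

Theorem theorem6 (r K h w a b c delta : R)
  (hr : 0 < r) (hK : 0 < K) (hh : 0 < h) (hw : 0 < w)
  (ha : 0 < a) (hb : 0 < b) (hc : 0 < c) (hdelta : 0 < delta)
  (hKw : K > w) (hAllee : h > w) :
  (h = (K + w) ^ 2 / (4 * K) ->
   c < delta * (b + N3 K w ^ 2) / N3 K w ->
   is_equilibrium (fN r K h w a b) (fP b c delta) (N3 K w) 0 /\
   non_hyperbolic (fN r K h w a b) (fP b c delta) (N3 K w) 0) /\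
  (h < (K + w) ^ 2 / (4 * K) ->
   c < delta * (b + N1 K w h ^ 2) / N1 K w h ->
   c < delta * (b + N2 K w h ^ 2) / N2 K w h ->
   is_equilibrium (fN r K h w a b) (fP b c delta) (N1 K w h) 0 /\
   loc_asympt_stable (fN r K h w a b) (fP b c delta) (N1 K w h) 0 /\
   is_equilibrium (fN r K h w a b) (fP b c delta) (N2 K w h) 0 /\
   unstable (fN r K h w a b) (fP b c delta) (N2 K w h) 0 /\
   saddle (fN r K h w a b) (fP b c delta) (N2 K w h) 0).
Proof.
  split.
  - intros H3 Hc.
    assert (HN : 0 < N3 K w) by (unfold N3; lra).
    assert (Hq : N3 K w ^2 - (K-w)*N3 K w + K*(h-w) = 0).
    { rewrite H3. unfold N3. field. lra. }
    destruct (gen r K h w a b c delta (N3 K w) hK hw hb HN Hq) as [He [Hall [HA HB]]].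
    split; auto.
    eexists; split; [exact HA|].
    rewrite re_RtoC. unfold N3. field. split; lra.
  - intros Hlt Hc1 Hc2.
    set (D := (K - w) ^ 2 - 4 * K * (h - w)).
    assert (HD : 0 < D).
    { unfold D. apply (Rmult_lt_compat_r (4*K)) in Hlt; [|lra].
      replace ((K+w)^2/(4*K)*(4*K)) with ((K+w)^2) in Hlt by (field; lra). nra. }
    assert (HD2 : D < (K-w)^2) by (unfold D; nra).
    set (s := sqrt D).
    assert (Hs2 : s * s = D) by (apply sqrt_sqrt; lra).
    assert (Hs0 : 0 < s) by (apply sqrt_lt_R0; lra).
    assert (Hs1 : s < K - w) by nra.
    assert (E1 : N1 K w h = (K-w+s)/2) by reflexivity.
    assert (E2 : N2 K w h = (K-w-s)/2) by reflexivity.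
    assert (HN1 : 0 < N1 K w h) by lra.
    assert (HN2 : 0 < N2 K w h) by lra.
    assert (Hq1 : N1 K w h ^2 - (K-w)*N1 K w h + K*(h-w) = 0).
    { rewrite E1. unfold D in Hs2. nra. }
    assert (Hq2 : N2 K w h ^2 - (K-w)*N2 K w h + K*(h-w) = 0).
    { rewrite E2. unfold D in Hs2. nra. }
    destruct (gen r K h w a b c delta _ hK hw hb HN1 Hq1) as [He1 [Hall1 [HA1 HB1]]].
    destruct (gen r K h w a b c delta _ hK hw hb HN2 Hq2) as [He2 [Hall2 [HA2 HB2]]].
    assert (J1 : r * N1 K w h * (K - w - 2 * N1 K w h) / (K * (w + N1 K w h)) < 0).
    { replace (K - w - 2 * N1 K w h) with (-s) by lra.
      assert (T := j11pos r K w (N1 K w h) s hr hK hw HN1 Hs0).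
      replace (r * N1 K w h * - s / (K * (w + N1 K w h))) with
        (- (r * N1 K w h * s / (K * (w + N1 K w h)))) by (field; lra). lra. }
    assert (J2 : 0 < r * N2 K w h * (K - w - 2 * N2 K w h) / (K * (w + N2 K w h))).
    { replace (K - w - 2 * N2 K w h) with s by lra.
      apply j11pos; lra. }
    assert (P1 := j22neg b c delta _ HN1 hb Hc1).
    assert (P2 := j22neg b c delta _ HN2 hb Hc2).
    split; [exact He1|]. split.
    { intros lam Hl. destruct (Hall1 lam Hl) as [_ [-> | ->]]; lra. }
    split; [exact He2|]. split.
    { eexists; split; [exact HA2|]. rewrite re_RtoC. exact J2. }
    split; [|split].
    + intros lam Hl. apply (Hall2 lam Hl).
    + eexists; split; [exact HA2|]. rewrite re_RtoC. exact J2.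
    + eexists; split; [exact HB2|]. rewrite re_RtoC. exact P2.
Qed.
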